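(* Consider the second-order Kuramoto model with bonding force $$\dot\theta_i=\omega_i,\qquad \dot\omega_i=\frac{1}{N}\sum_{j=1}^N\big[\kappa_0\cos(\theta_j-\theta_i)+\kappa_1\big](\omega_j-\omega_i)+\frac{\kappa_2}{N}\sum_{j=1}^N\big[|\theta_j-\theta_i|-\theta^\infty_{ij}\big]\operatorname{sgn}(\theta_j-\theta_i),\quad i\in[N].$$ Suppose the initial data $(\Theta^0,W^0)=(\theta_1^0,\dots,\theta_N^0,\omega_1^0,\dots,\omega_N^0)$ and parameters satisfy $$(\Theta^0,W^0)\in\mathcal{S},\qquad \kappa_0\cos\mathcal{U}+\kappa_1>0,\qquad \kappa_2>0,$$ and for some $\tau\in(0,\infty]$ let $\{(\theta_i,\omega_i)\}$ be a solution on $[0,\tau)$ with these initial data. Then $(\Theta(t),W(t))\in\mathcal{S}$ for all $t\in[0,\tau)$.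
   Context: $N\ge2$, $[N]=\{1,\dots,N\}$, $\kappa_0,\kappa_1\ge0$, $\kappa_2>0$ constants; $[\theta^\infty_{ij}]$ real $N\times N$ matrix with $\theta^\infty_{ii}=0$, $\theta^\infty_{ij}=\theta^\infty_{ji}$; $\operatorname{sgn}$ is the sign function. Energy: $\mathcal{E}:=\frac12\sum_i|\omega_i|^2+\frac{\kappa_2}{4N}\sum_{i,j}(|\theta_j-\theta_i|-\theta^\infty_{ij})^2$, and $\mathcal{E}(0)$ its value at the initial data. Define $\mathcal{U}:=\max_{i\ne j}\theta^\infty_{ij}+\sqrt{2N\mathcal{E}(0)/\kappa_2}$ and $\mathcal{S}:=\{(\Theta,W)\in\mathbb{R}^{2N}: |\theta_i-\theta_j|<\mathcal{U}<\pi \text{ for all } i,j\in[N]\}$ (in particular membership requires $\mathcal{U}<\pi$). A solution means a smooth (classical $C^1$) solution. *)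

(* Defs.v *)
From Stdlib Require Import Reals Lra List.
From Coquelicot Require Import Coquelicot.
Import ListNotations.
Open Scope R_scope.

(* Oscillators are indexed by natural numbers 0 .. N-1 (i.e. i < N). *)

Definition sgn (x : R) : R :=
  if Rlt_dec 0 x then 1 else if Rlt_dec x 0 then -1 else 0.

Definition sumN (N : nat) (f : nat -> R) : R :=
  fold_right Rplus 0 (map f (seq 0 N)).

Definition offdiag_pairs (N : nat) : list (nat * nat) :=
  filter (fun p => negb (Nat.eqb (fst p) (snd p)))
         (list_prod (seq 0 N) (seq 0 N)).

(* max_{i <> j} thinf i j ; for N >= 2 the default (0,1) is itself an
   off-diagonal pair, so this is the genuine maximum. *)
Definition max_offdiag (N : nat) (thinf : nat -> nat -> R) : R :=
  fold_right (fun p m => Rmax (thinf (fst p) (snd p)) m)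
             (thinf 0%nat 1%nat) (offdiag_pairs N).

Definition energy (N : nat) (k2 : R) (thinf : nat -> nat -> R)
  (Th W : nat -> R) : R :=
  / 2 * sumN N (fun i => (W i) ^ 2)
  + k2 / (4 * INR N) *
    sumN N (fun i => sumN N (fun j =>
       (Rabs (Th j - Th i) - thinf i j) ^ 2)).

Definition U_bound (N : nat) (k2 : R) (thinf : nat -> nat -> R) (E0 : R) : R :=
  max_offdiag N thinf + sqrt (2 * INR N * E0 / k2).

(* membership of (Theta, W) in S (only Theta matters) *)
Definition in_S (N : nat) (U : R) (Th : nat -> R) : Prop :=
  U < PI /\ forall i j, (i < N)%nat -> (j < N)%nat -> Rabs (Th i - Th j) < U.

Definition kuramoto_rhs (N : nat) (k0 k1 k2 : R) (thinf : nat -> nat -> R)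
  (Th W : nat -> R) (i : nat) : R :=
  / INR N * sumN N (fun j => (k0 * cos (Th j - Th i) + k1) * (W j - W i))
  + k2 / INR N * sumN N (fun j =>
      (Rabs (Th j - Th i) - thinf i j) * sgn (Th j - Th i)).

Definition is_solution (N : nat) (k0 k1 k2 : R) (thinf : nat -> nat -> R)
  (tau : Rbar) (theta omega : R -> nat -> R) : Prop :=
  forall i, (i < N)%nat ->
    filterlim (fun s => theta s i) (at_right 0) (locally (theta 0 i)) /\
    filterlim (fun s => omega s i) (at_right 0) (locally (omega 0 i)) /\
    (forall t, 0 < t -> Rbar_lt t tau ->
       is_derive (fun s => theta s i) t (omega t i) /\
       is_derive (fun s => omega s i) t
         (kuramoto_rhs N k0 k1 k2 thinf (theta t) (omega t) i)).

(* Main.v *)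
Require Import Defs.
From Stdlib Require Import Reals Lra List Lia Classical.
From Coquelicot Require Import Coquelicot.
Open Scope R_scope.

Lemma fold_Rplus_acc : forall l a, fold_right Rplus a l = fold_right Rplus 0 l + a.
Proof. induction l; intros; simpl; [ring| rewrite IHl; ring]. Qed.

Lemma sumN_0 f : sumN 0 f = 0.
Proof. reflexivity. Qed.

Lemma sumN_S n f : sumN (S n) f = sumN n f + f n.
Proof. unfold sumN. rewrite seq_S, map_app, fold_right_app. simpl.
  rewrite fold_Rplus_acc. ring. Qed.

Lemma sumN_ext n f g : (forall i, (i < n)%nat -> f i = g i) -> sumN n f = sumN n g.
Proof. induction n; intros H; [reflexivity|]. rewrite !sumN_S, IHn, H; auto. Qed.

Lemma sumN_plus n f g : sumN n (fun i => f i + g i) = sumN n f + sumN n g.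
Proof. induction n; [simpl; unfold sumN; simpl; ring|]. rewrite !sumN_S, IHn; ring. Qed.

Lemma sumN_scal n c f : sumN n (fun i => c * f i) = c * sumN n f.
Proof. induction n; [unfold sumN; simpl; ring|]. rewrite !sumN_S, IHn; ring. Qed.

Lemma sumN_swap n m F : sumN n (fun i => sumN m (fun j => F i j)) = sumN m (fun j => sumN n (fun i => F i j)).
Proof. induction n.
  - unfold sumN at 1. simpl. induction m; [reflexivity|]. rewrite sumN_S, <- IHm. unfold sumN; simpl; ring.
  - rewrite sumN_S, IHn, <- sumN_plus. apply sumN_ext. intros. rewrite sumN_S. reflexivity. Qed.

Lemma sumN_nonneg n f : (forall i, (i < n)%nat -> 0 <= f i) -> 0 <= sumN n f.
Proof. induction n; intros H; [unfold sumN; simpl; lra|]. rewrite sumN_S.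
  assert (0 <= f n) by (apply H; lia). assert (0 <= sumN n f) by (apply IHn; intros; apply H; lia). lra. Qed.

Lemma sumN_ge1 n f k : (forall i, (i < n)%nat -> 0 <= f i) -> (k < n)%nat -> f k <= sumN n f.
Proof. induction n; intros H Hk; [lia|]. rewrite sumN_S.
  destruct (Nat.eq_dec k n).
  - subst. assert (0 <= sumN n f) by (apply sumN_nonneg; intros; apply H; lia). lra.
  - assert (f k <= sumN n f) by (apply IHn; [intros; apply H; lia| lia]). assert (0 <= f n) by (apply H; lia). lra. Qed.

Lemma sumN_ge2 n f k l : (forall i, (i < n)%nat -> 0 <= f i) -> (k < n)%nat -> (l < n)%nat -> k <> l ->
  f k + f l <= sumN n f.
Proof. induction n; intros H Hk Hl Hkl; [lia|]. rewrite sumN_S.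
  destruct (Nat.eq_dec k n).
  - subst. assert (f l <= sumN n f) by (apply sumN_ge1; [intros; apply H; lia|lia]). lra.
  - destruct (Nat.eq_dec l n).
    + subst. assert (f k <= sumN n f) by (apply sumN_ge1; [intros; apply H; lia|lia]). lra.
    + assert (f k + f l <= sumN n f) by (apply IHn; [intros; apply H; lia|lia|lia|auto]).
      assert (0 <= f n) by (apply H; lia). lra. Qed.

Lemma sumN_zero_each n f : (forall i, (i < n)%nat -> 0 <= f i) -> sumN n f = 0 -> forall k, (k < n)%nat -> f k = 0.
Proof. intros H Hs k Hk. assert (f k <= sumN n f) by (apply sumN_ge1; auto).
  assert (0 <= f k) by auto. lra. Qed.

Definition rd (f : R -> R) (u l : R) := forall eps, 0 < eps -> exists del, 0 < del /\
  forall h, 0 < h < del -> Rabs (f (u + h) - f u - l * h) <= eps * h.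
Definition ld (f : R -> R) (u l : R) := rd (fun s => f (- s)) (- u) (- l).
Definition rc (f : R -> R) (u : R) := forall eps, 0 < eps -> exists del, 0 < del /\
  forall h, 0 < h < del -> Rabs (f (u + h) - f u) < eps.
Definition lc (f : R -> R) (u : R) := rc (fun s => f (- s)) (- u).

Lemma rd_val f u l l' : rd f u l -> l = l' -> rd f u l'.
Proof. intros H <-; exact H. Qed.
Lemma rd_ext f g u l : (forall t, f t = g t) -> rd f u l -> rd g u l.
Proof. intros E H eps He. destruct (H eps He) as [d [Hd H']]. exists d; split; auto.
  intros h Hh. rewrite <- !E. auto. Qed.
Lemma rc_ext f g u : (forall t, f t = g t) -> rc f u -> rc g u.
Proof. intros E H eps He. destruct (H eps He) as [d [Hd H']]. exists d; split; auto.
  intros h Hh. rewrite <- !E. auto. Qed.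

Lemma rd_rc f u l : rd f u l -> rc f u.
Proof. intros H eps He. destruct (H 1 Rlt_0_1) as [d [Hd H']].
  exists (Rmin d (eps / (Rabs l + 1))). split.
  { apply Rmin_glb_lt; auto. apply Rdiv_lt_0_compat; auto. pose proof (Rabs_pos l); lra. }
  intros h [h0 hd]. pose proof (Rmin_l d (eps / (Rabs l + 1))). pose proof (Rmin_r d (eps / (Rabs l + 1))).
  assert (A := H' h ltac:(lra)).
  assert (Rabs (l*h) = Rabs l * h) by (rewrite Rabs_mult, (Rabs_pos_eq h); lra).
  assert (Rabs (f (u+h) - f u) <= (Rabs l + 1) * h).
  { replace (f (u+h) - f u) with ((f (u + h) - f u - l * h) + l*h) by ring.
    eapply Rle_trans; [apply Rabs_triang|]. lra. }
  assert (h * (Rabs l + 1) < eps).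
  { assert (h < eps / (Rabs l + 1)) by lra. pose proof (Rabs_pos l).
    apply (Rmult_lt_compat_r (Rabs l + 1)) in H4; [|lra].
    unfold Rdiv in H4. rewrite Rmult_assoc, Rinv_l in H4; lra. }
  lra. Qed.

Lemma rd_plus f g u l1 l2 : rd f u l1 -> rd g u l2 -> rd (fun t => f t + g t) u (l1 + l2).
Proof. intros H1 H2 eps He. destruct (H1 (eps/2) ltac:(lra)) as [d1 [Hd1 A1]].
  destruct (H2 (eps/2) ltac:(lra)) as [d2 [Hd2 A2]].
  exists (Rmin d1 d2); split; [apply Rmin_glb_lt; auto|]. intros h [h0 hd].
  pose proof (Rmin_l d1 d2). pose proof (Rmin_r d1 d2).
  specialize (A1 h ltac:(lra)). specialize (A2 h ltac:(lra)).
  replace (f (u + h) + g (u + h) - (f u + g u) - (l1 + l2) * h) with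
    ((f (u + h) - f u - l1 * h) + (g (u + h) - g u - l2 * h)) by ring.
  eapply Rle_trans; [apply Rabs_triang|]. lra. Qed.

Lemma rd_minus f g u l1 l2 : rd f u l1 -> rd g u l2 -> rd (fun t => f t - g t) u (l1 - l2).
Proof. intros H1 H2 eps He. destruct (H1 (eps/2) ltac:(lra)) as [d1 [Hd1 A1]].
  destruct (H2 (eps/2) ltac:(lra)) as [d2 [Hd2 A2]].
  exists (Rmin d1 d2); split; [apply Rmin_glb_lt; auto|]. intros h [h0 hd].
  pose proof (Rmin_l d1 d2). pose proof (Rmin_r d1 d2).
  specialize (A1 h ltac:(lra)). specialize (A2 h ltac:(lra)).
  replace (f (u + h) - g (u + h) - (f u - g u) - (l1 - l2) * h) with
    ((f (u + h) - f u - l1 * h) - (g (u + h) - g u - l2 * h)) by ring.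
  eapply Rle_trans; [apply Rabs_triang|]. rewrite Rabs_Ropp. lra. Qed.

Lemma rd_minus_const f a u l : rd f u l -> rd (fun t => f t - a) u l.
Proof. intros H eps He. destruct (H eps He) as [d [Hd A]]. exists d; split; auto.
  intros h Hh. replace (f (u + h) - a - (f u - a) - l * h) with (f (u + h) - f u - l * h) by ring. auto. Qed.

Lemma rd_scal c f u l : rd f u l -> rd (fun t => c * f t) u (c * l).
Proof. intros H eps He. pose proof (Rabs_pos c).
  destruct (H (eps / (Rabs c + 1))) as [d [Hd A]].
  { apply Rdiv_lt_0_compat; lra. }
  exists d; split; auto. intros h Hh. specialize (A h Hh).
  replace (c * f (u + h) - c * f u - c * l * h) with (c * (f (u + h) - f u - l * h)) by ring.
  rewrite Rabs_mult.
  assert (Rabs c * Rabs (f (u + h) - f u - l * h) <= (Rabs c + 1) * (eps / (Rabs c + 1) * h)).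
  { apply Rmult_le_compat; try lra; apply Rabs_pos. }
  replace ((Rabs c + 1) * (eps / (Rabs c + 1) * h)) with (eps * h) in H1 by (field; lra). lra. Qed.

Lemma rd_pow2 f u l : rd f u l -> rd (fun t => (f t) ^ 2) u (2 * f u * l).
Proof. intros H eps He. pose proof (Rabs_pos (f u)). pose proof (Rabs_pos l).
  set (e1 := Rmin 1 (eps / (2 * (2 * Rabs (f u) + 1)))).
  assert (He1 : 0 < e1). { apply Rmin_glb_lt; [lra|]. apply Rdiv_lt_0_compat; lra. }
  assert (He1' : 2 * Rabs (f u) * e1 <= eps / 2).
  { assert (e1 <= eps / (2 * (2 * Rabs (f u) + 1))) by apply Rmin_r.
    assert ((2 * Rabs (f u) + 1) * e1 <= eps / 2).
    { apply (Rmult_le_compat_l (2 * Rabs (f u) + 1)) in H2; [|lra].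
      replace ((2 * Rabs (f u) + 1) * (eps / (2 * (2 * Rabs (f u) + 1)))) with (eps/2) in H2 by (field; lra). lra. }
    nra. }
  assert (He1'' : e1 <= 1) by apply Rmin_l.
  destruct (H e1 He1) as [d1 [Hd1 A1]].
  set (eta := eps / (2 * (Rabs l + 1))).
  assert (Heta : 0 < eta) by (apply Rdiv_lt_0_compat; lra).
  destruct (rd_rc f u l H eta Heta) as [d2 [Hd2 A2]].
  exists (Rmin d1 d2); split; [apply Rmin_glb_lt; auto|]. intros h [h0 hd].
  pose proof (Rmin_l d1 d2). pose proof (Rmin_r d1 d2).
  specialize (A1 h ltac:(lra)). specialize (A2 h ltac:(lra)).
  set (d := f (u + h) - f u) in *.
  replace (f (u + h) ^ 2 - f u ^ 2 - 2 * f u * l * h) with (2 * f u * (d - l * h) + d * d) by (unfold d; ring).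
  eapply Rle_trans; [apply Rabs_triang|]. rewrite !Rabs_mult.
  assert (Rabs 2 = 2) by (rewrite Rabs_pos_eq; lra). rewrite H4.
  assert (Rabs d <= (1 + Rabs l) * h).
  { replace d with ((d - l*h) + l * h) by ring. eapply Rle_trans; [apply Rabs_triang|].
    rewrite Rabs_mult, (Rabs_pos_eq h) by lra. nra. }
  assert (Rabs d * Rabs d <= eta * ((1 + Rabs l) * h)).
  { pose proof (Rabs_pos d). apply Rmult_le_compat; lra. }
  assert (eta * ((1 + Rabs l) * h) = eps / 2 * h) by (unfold eta; field; lra).
  assert (2 * Rabs (f u) * Rabs (d - l * h) <= 2 * Rabs (f u) * (e1 * h)).
  { apply Rmult_le_compat_l; lra. }
  nra. Qed.

Definition R0 (x v : R) : R := if Rlt_dec 0 x then v else if Rlt_dec x 0 then - v else Rabs v.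

Lemma R0_sum x v : R0 x v - R0 x (- v) = 2 * sgn x * v.
Proof. unfold R0, sgn. destruct (Rlt_dec 0 x); [ring|]. destruct (Rlt_dec x 0); [ring|].
  rewrite Rabs_Ropp. ring. Qed.

Lemma rd_abs f u l : rd f u l -> rd (fun t => Rabs (f t)) u (R0 (f u) l).
Proof. intros H. unfold R0. destruct (Rlt_dec 0 (f u)) as [Hp|Hp].
  - destruct (rd_rc f u l H (f u) Hp) as [d0 [Hd0 A0]].
    intros eps He. destruct (H eps He) as [d [Hd A]]. exists (Rmin d d0); split; [apply Rmin_glb_lt; auto|].
    intros h [h0 hd]. pose proof (Rmin_l d d0). pose proof (Rmin_r d d0).
    specialize (A h ltac:(lra)). specialize (A0 h ltac:(lra)).
    apply Rabs_def2 in A0. rewrite (Rabs_pos_eq (f (u+h))) by lra. rewrite (Rabs_pos_eq (f u)) by lra. auto.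
  - destruct (Rlt_dec (f u) 0) as [Hn|Hn].
    + destruct (rd_rc f u l H (- f u) ltac:(lra)) as [d0 [Hd0 A0]].
      intros eps He. destruct (H eps He) as [d [Hd A]]. exists (Rmin d d0); split; [apply Rmin_glb_lt; auto|].
      intros h [h0 hd]. pose proof (Rmin_l d d0). pose proof (Rmin_r d d0).
      specialize (A h ltac:(lra)). specialize (A0 h ltac:(lra)).
      apply Rabs_def2 in A0. rewrite (Rabs_left (f (u+h))) by lra. rewrite (Rabs_left (f u)) by lra.
      replace (- f (u + h) - - f u - - l * h) with (- (f (u + h) - f u - l * h)) by ring.
      rewrite Rabs_Ropp; auto.
    + assert (E0 : f u = 0) by lra.
      intros eps He. destruct (H eps He) as [d [Hd A]]. exists d; split; auto.
      intros h Hh. specialize (A h Hh). rewrite E0, Rabs_R0.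
      replace (Rabs l * h) with (Rabs (l * h)) by (rewrite Rabs_mult, (Rabs_pos_eq h); lra).
      eapply Rle_trans; [|apply A]. rewrite E0.
      replace (f (u + h) - 0 - l * h) with (f (u+h) - l * h) by ring.
      replace (Rabs (f (u + h)) - 0 - Rabs (l * h)) with (Rabs (f (u + h)) - Rabs (l * h)) by ring.
      apply Rabs_triang_inv2. Qed.

Lemma rd_sum n F u l : (forall i, (i < n)%nat -> rd (fun t => F t i) u (l i)) ->
  rd (fun t => sumN n (F t)) u (sumN n l).
Proof. induction n; intros H.
  - intros eps He. exists 1; split; [lra|]. intros h Hh. unfold sumN; simpl.
    rewrite Rminus_0_r, Rmult_0_l, Rminus_0_r, Rabs_R0. nra.
  - eapply rd_ext; [intro t; symmetry; apply sumN_S|]. rewrite sumN_S.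
    apply rd_plus; [apply IHn; intros; apply H; lia| apply H; lia]. Qed.

Lemma rd_of_derive f u l : is_derive f u l -> rd f u l.
Proof. intros H. apply is_derive_Reals in H. intros eps He. destruct (H eps He) as [d A].
  exists d; split; [apply cond_pos|]. intros h [h0 hd].
  assert (B := A h ltac:(lra) ltac:(rewrite Rabs_pos_eq; lra)).
  replace (f (u + h) - f u - l * h) with (((f (u + h) - f u) / h - l) * h) by (field; lra).
  rewrite Rabs_mult, (Rabs_pos_eq h) by lra. nra. Qed.

Lemma ld_of_derive f u l : is_derive f u l -> ld f u l.
Proof. intros H. apply is_derive_Reals in H. intros eps He. destruct (H eps He) as [d A].
  exists d; split; [apply cond_pos|]. intros h [h0 hd].
  assert (B := A (-h) ltac:(lra) ltac:(rewrite Rabs_left; lra)).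
  replace (- (- u + h)) with (u + - h) by ring. rewrite Ropp_involutive.
  replace (f (u + - h) - f u - - l * h) with (- (((f (u + - h) - f u) / (- h) - l) * h)) by (field; lra).
  rewrite Rabs_Ropp, Rabs_mult, (Rabs_pos_eq h) by lra. nra. Qed.

Lemma ld_val f u l l' : ld f u l -> l = l' -> ld f u l'.
Proof. intros H <-; exact H. Qed.
Lemma ld_plus f g u l1 l2 : ld f u l1 -> ld g u l2 -> ld (fun t => f t + g t) u (l1 + l2).
Proof. intros H1 H2. unfold ld. eapply rd_val; [apply (rd_plus _ _ _ _ _ H1 H2)|ring]. Qed.
Lemma ld_minus f g u l1 l2 : ld f u l1 -> ld g u l2 -> ld (fun t => f t - g t) u (l1 - l2).
Proof. intros H1 H2. unfold ld. eapply rd_val; [apply (rd_minus _ _ _ _ _ H1 H2)|ring]. Qed.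
Lemma ld_minus_const f a u l : ld f u l -> ld (fun t => f t - a) u l.
Proof. intros H1. unfold ld. apply (rd_minus_const _ a _ _ H1). Qed.
Lemma ld_scal c f u l : ld f u l -> ld (fun t => c * f t) u (c * l).
Proof. intros H1. unfold ld. eapply rd_val; [apply (rd_scal c _ _ _ H1)|ring]. Qed.
Lemma ld_pow2 f u l : ld f u l -> ld (fun t => (f t) ^ 2) u (2 * f u * l).
Proof. intros H1. unfold ld. eapply rd_val; [apply (rd_pow2 _ _ _ H1)|]. rewrite Ropp_involutive. ring. Qed.
Lemma ld_abs f u l : ld f u l -> ld (fun t => Rabs (f t)) u (- R0 (f u) (- l)).
Proof. intros H1. unfold ld. eapply rd_val; [apply (rd_abs _ _ _ H1)|]. rewrite Ropp_involutive. ring. Qed.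
Lemma ld_sum n F u l : (forall i, (i < n)%nat -> ld (fun t => F t i) u (l i)) ->
  ld (fun t => sumN n (F t)) u (sumN n l).
Proof. intros H. unfold ld. eapply rd_val; [apply (rd_sum n (fun t i => F (- t) i) (- u) (fun i => - l i)); exact H|].
  replace (- sumN n l) with (-1 * sumN n l) by ring. rewrite <- sumN_scal. apply sumN_ext. intros; ring. Qed.

Lemma rc_plus f g u : rc f u -> rc g u -> rc (fun t => f t + g t) u.
Proof. intros H1 H2 eps He. destruct (H1 (eps/2) ltac:(lra)) as [d1 [Hd1 A1]].
  destruct (H2 (eps/2) ltac:(lra)) as [d2 [Hd2 A2]].
  exists (Rmin d1 d2); split; [apply Rmin_glb_lt; auto|]. intros h [h0 hd].
  pose proof (Rmin_l d1 d2). pose proof (Rmin_r d1 d2).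
  specialize (A1 h ltac:(lra)). specialize (A2 h ltac:(lra)).
  replace (f (u + h) + g (u + h) - (f u + g u)) with ((f (u + h) - f u) + (g (u + h) - g u)) by ring.
  eapply Rle_lt_trans; [apply Rabs_triang|]. lra. Qed.

Lemma rc_minus f g u : rc f u -> rc g u -> rc (fun t => f t - g t) u.
Proof. intros H1 H2 eps He. destruct (H1 (eps/2) ltac:(lra)) as [d1 [Hd1 A1]].
  destruct (H2 (eps/2) ltac:(lra)) as [d2 [Hd2 A2]].
  exists (Rmin d1 d2); split; [apply Rmin_glb_lt; auto|]. intros h [h0 hd].
  pose proof (Rmin_l d1 d2). pose proof (Rmin_r d1 d2).
  specialize (A1 h ltac:(lra)). specialize (A2 h ltac:(lra)).
  replace (f (u + h) - g (u + h) - (f u - g u)) with ((f (u + h) - f u) - (g (u + h) - g u)) by ring.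
  eapply Rle_lt_trans; [apply Rabs_triang|]. rewrite Rabs_Ropp. lra. Qed.

Lemma rc_minus_const f a u : rc f u -> rc (fun t => f t - a) u.
Proof. intros H eps He. destruct (H eps He) as [d [Hd A]]. exists d; split; auto.
  intros h Hh. replace (f (u + h) - a - (f u - a)) with (f (u + h) - f u) by ring. auto. Qed.

Lemma rc_scal c f u : rc f u -> rc (fun t => c * f t) u.
Proof. intros H eps He. pose proof (Rabs_pos c).
  destruct (H (eps / (Rabs c + 1))) as [d [Hd A]]. { apply Rdiv_lt_0_compat; lra. }
  exists d; split; auto. intros h Hh. specialize (A h Hh).
  replace (c * f (u + h) - c * f u) with (c * (f (u + h) - f u)) by ring.
  rewrite Rabs_mult.
  assert (Rabs c * Rabs (f (u + h) - f u) <= Rabs c * (eps / (Rabs c + 1))).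
  { apply Rmult_le_compat_l; lra. }
  assert (Rabs c * (eps / (Rabs c + 1)) < eps).
  { apply (Rmult_lt_reg_r (Rabs c + 1)); [lra|]. field_simplify; lra. }
  lra. Qed.

Lemma rc_abs f u : rc f u -> rc (fun t => Rabs (f t)) u.
Proof. intros H eps He. destruct (H eps He) as [d [Hd A]]. exists d; split; auto.
  intros h Hh. eapply Rle_lt_trans; [apply Rabs_triang_inv2|]. auto. Qed.

Lemma rc_pow2 f u : rc f u -> rc (fun t => (f t) ^ 2) u.
Proof. intros H eps He. pose proof (Rabs_pos (f u)).
  set (e1 := Rmin 1 (eps / (2 * Rabs (f u) + 1))).
  assert (He1 : 0 < e1). { apply Rmin_glb_lt; [lra|]. apply Rdiv_lt_0_compat; lra. }
  assert (e1 <= 1) by apply Rmin_l.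
  assert (e1 * (2 * Rabs (f u) + 1) <= eps).
  { assert (e1 <= eps / (2 * Rabs (f u) + 1)) by apply Rmin_r.
    apply (Rmult_le_compat_r (2 * Rabs (f u) + 1)) in H2; [|lra].
    unfold Rdiv in H2. rewrite Rmult_assoc, Rinv_l in H2; lra. }
  destruct (H e1 He1) as [d [Hd A]]. exists d; split; auto. intros h Hh. specialize (A h Hh).
  set (dd := f (u + h) - f u) in *.
  replace (f (u + h) ^ 2 - f u ^ 2) with (dd * (dd + 2 * f u)) by (unfold dd; ring).
  rewrite Rabs_mult.
  assert (Rabs (dd + 2 * f u) <= 1 + 2 * Rabs (f u)).
  { eapply Rle_trans; [apply Rabs_triang|]. rewrite Rabs_mult, (Rabs_pos_eq 2) by lra. lra. }
  pose proof (Rabs_pos dd). pose proof (Rabs_pos (dd + 2 * f u)).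
  assert (Rabs dd * Rabs (dd + 2 * f u) <= Rabs dd * (1 + 2 * Rabs (f u))) by (apply Rmult_le_compat_l; lra).
  assert (Rabs dd * (1 + 2 * Rabs (f u)) < e1 * (1 + 2 * Rabs (f u))) by (apply Rmult_lt_compat_r; lra).
  lra. Qed.

Lemma rc_sum n F u : (forall i, (i < n)%nat -> rc (fun t => F t i) u) -> rc (fun t => sumN n (F t)) u.
Proof. induction n; intros H.
  - intros eps He. exists 1; split; [lra|]. intros h Hh. unfold sumN; simpl.
    rewrite Rminus_0_r, Rabs_R0. lra.
  - eapply rc_ext; [intro t; symmetry; apply sumN_S|].
    apply rc_plus; [apply IHn; intros; apply H; lia| apply H; lia]. Qed.

Lemma rc_of_filterlim f u : filterlim f (at_right u) (locally (f u)) -> rc f u.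
Proof. intros H eps He. apply filterlim_locally with (eps := mkposreal eps He) in H.
  destruct H as [d Hd]. exists d; split; [apply cond_pos|]. intros h [h0 hd].
  apply (Hd (u + h)). { change (Rabs (u + h - u) < d). rewrite Rabs_pos_eq; lra. } lra. Qed.

Lemma lc_unfold g b : lc g b -> forall eps, 0 < eps -> exists del, 0 < del /\
  forall k, 0 < k < del -> Rabs (g (b - k) - g b) < eps.
Proof. intros H eps He. destruct (H eps He) as [d [Hd A]]. exists d; split; auto.
  intros k Hk. specialize (A k Hk). replace (- (- b + k)) with (b - k) in A by ring.
  rewrite Ropp_involutive in A. exact A. Qed.

Lemma ld_unfold g b l : ld g b l -> forall eps, 0 < eps -> exists del, 0 < del /\
  forall k, 0 < k < del -> Rabs (g (b - k) - g b + l * k) <= eps * k.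
Proof. intros H eps He. destruct (H eps He) as [d [Hd A]]. exists d; split; auto.
  intros k Hk. specialize (A k Hk). replace (- (- b + k)) with (b - k) in A by ring.
  rewrite Ropp_involutive in A. replace (g (b - k) - g b + l * k) with (g (b - k) - g b - - l * k) by ring. exact A. Qed.

Lemma ld_lc g b l : ld g b l -> lc g b.
Proof. intros H. exact (rd_rc _ _ _ H). Qed.

Lemma mono g s t : s < t -> rc g s -> lc g t ->
  (forall u, s < u < t -> exists l1 l2, rd g u l1 /\ ld g u l2 /\ l1 + l2 <= 0) -> g t <= g s.
Proof. intros Hst Hrs Hlt Hloc. destruct (Rle_dec (g t) (g s)) as [|Hn]; auto. exfalso. apply Rnot_le_lt in Hn.
  set (eta := (g t - g s) / (2 * (t - s))).
  assert (Heta : 0 < eta) by (apply Rdiv_lt_0_compat; lra).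
  set (h := fun w => g w - eta * (w - s)).
  assert (Hht : h t = (g t + g s) / 2) by (unfold h, eta; field; lra).
  assert (Hhs : h s = g s) by (unfold h; ring).
  set (c := (3 * g s + g t) / 4).
  assert (Hcs : h s < c) by (unfold c; lra). assert (Hct : c < h t) by (unfold c; lra).
  set (E := fun y => s <= y <= t /\ h y < c).
  destruct (completeness E) as [b [Hub Hlub]].
  { exists t. intros y [Hy _]. lra. }
  { exists s. split; [lra|auto]. }
  assert (Hbs : s <= b) by (apply Hub; split; [lra|auto]).
  assert (Hbt : b <= t) by (apply Hlub; intros y [Hy _]; lra).
  assert (F2 : forall y, b < y <= t -> c <= h y).
  { intros y Hy. destruct (Rle_dec c (h y)); auto. assert (y <= b) by (apply Hub; split; lra). lra. }
  assert (F3 : forall d, 0 < d -> exists y, b - d < y <= b /\ s <= y /\ h y < c).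
  { intros d Hd. destruct (classic (exists y, b - d < y <= b /\ s <= y /\ h y < c)) as [|Hne]; auto.
    assert (b <= b - d); [|lra]. apply Hlub. intros y [Hy1 Hy2].
    assert (y <= b) by (apply Hub; split; auto).
    destruct (Rle_dec y (b - d)); auto. exfalso. apply Hne. exists y. split; [lra|]. split; lra. }
  assert (Hlcb : s < b -> lc g b).
  { intros Hsb. destruct (Rle_lt_or_eq b t Hbt) as [Hbt'| ->]; auto.
    destruct (Hloc b ltac:(lra)) as [l1 [l2 [_ [Hl _]]]]. eapply ld_lc; eauto. }
  assert (Hrcb : b < t -> rc g b).
  { intros Hbt'. destruct (Rle_lt_or_eq s b Hbs) as [Hsb| <-]; auto.
    destruct (Hloc b ltac:(lra)) as [l1 [l2 [Hr _]]]. eapply rd_rc; eauto. }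
  assert (Hle : h b <= c).
  { destruct (Rle_dec (h b) c) as [|Hgt]; auto. exfalso. apply Rnot_le_lt in Hgt.
    destruct (Rle_lt_or_eq s b Hbs) as [Hsb| <-]; [|lra].
    destruct (lc_unfold g b (Hlcb Hsb) ((h b - c)/2) ltac:(lra)) as [d [Hd A]].
    set (d' := Rmin d (Rmin ((h b - c) / (2 * (eta + 1))) (b - s))).
    assert (Hd' : 0 < d'). { apply Rmin_glb_lt; auto. apply Rmin_glb_lt; [|lra]. apply Rdiv_lt_0_compat; lra. }
    destruct (F3 d' Hd') as [y [Hy1 [Hy2 Hy3]]].
    destruct (Req_dec y b) as [->|Hyb]; [lra|].
    pose proof (Rmin_l d (Rmin ((h b - c) / (2 * (eta + 1))) (b - s))).
    pose proof (Rmin_r d (Rmin ((h b - c) / (2 * (eta + 1))) (b - s))).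
    pose proof (Rmin_l ((h b - c) / (2 * (eta + 1))) (b - s)).
    unfold d' in Hy1. set (k := b - y). assert (Hk : 0 < k < d) by (unfold k; lra).
    specialize (A k Hk). replace (b - k) with y in A by (unfold k; ring).
    assert (eta * k <= (h b - c) / 2).
    { assert (k <= (h b - c) / (2 * (eta + 1))) by (unfold k; lra).
      apply (Rmult_le_compat_l (eta + 1)) in H2; [|lra].
      replace ((eta + 1) * ((h b - c) / (2 * (eta + 1)))) with ((h b - c)/2) in H2 by (field; lra). nra. }
    assert (Hid : h y = h b - (g b - g y) + eta * k) by (unfold h, k; ring).
    assert (0 <= eta * k) by (apply Rmult_le_pos; [lra|unfold k; lra]).
    apply Rabs_def2 in A. lra. }
  assert (Hge : c <= h b).
  { destruct (Rle_lt_or_eq b t Hbt) as [Hbt'| ->]; [|lra].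
    destruct (Rle_dec c (h b)) as [|Hlt']; auto. exfalso. apply Rnot_le_lt in Hlt'.
    destruct (Hrcb Hbt' ((c - h b)/2) ltac:(lra)) as [d [Hd A]].
    set (k := Rmin d (Rmin ((c - h b) / (2 * (eta + 1))) (t - b)) / 2).
    assert (Hk0 : 0 < Rmin d (Rmin ((c - h b) / (2 * (eta + 1))) (t - b))).
    { apply Rmin_glb_lt; auto. apply Rmin_glb_lt; [|lra]. apply Rdiv_lt_0_compat; lra. }
    pose proof (Rmin_l d (Rmin ((c - h b) / (2 * (eta + 1))) (t - b))).
    pose proof (Rmin_r d (Rmin ((c - h b) / (2 * (eta + 1))) (t - b))).
    pose proof (Rmin_l ((c - h b) / (2 * (eta + 1))) (t - b)).
    pose proof (Rmin_r ((c - h b) / (2 * (eta + 1))) (t - b)).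
    specialize (A k ltac:(unfold k; lra)). specialize (F2 (b + k) ltac:(unfold k; lra)).
    assert (eta * k <= (c - h b) / 2).
    { assert (k <= (c - h b) / (2 * (eta + 1))) by (unfold k; lra).
      apply (Rmult_le_compat_l (eta + 1)) in H3; [|lra].
      replace ((eta + 1) * ((c - h b) / (2 * (eta + 1)))) with ((c - h b)/2) in H3 by (field; lra). nra. }
    assert (Hid : h (b + k) = h b + (g (b + k) - g b) - eta * k) by (unfold h; ring).
    assert (0 <= eta * k) by (apply Rmult_le_pos; [lra|unfold k; lra]).
    apply Rabs_def2 in A. lra. }
  assert (Hb : h b = c) by lra.
  assert (Hsb : s < b) by (destruct (Rle_lt_or_eq s b Hbs) as [| <-]; lra).
  assert (Hbt' : b < t) by (destruct (Rle_lt_or_eq b t Hbt) as [| ->]; lra).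
  destruct (Hloc b ltac:(lra)) as [l1 [l2 [Hr [Hl Hsum]]]].
  destruct (Rle_dec l1 0) as [Hl1|Hl1].
  - destruct (Hr (eta/2) ltac:(lra)) as [d [Hd A]].
    set (k := Rmin d (t - b) / 2).
    assert (0 < Rmin d (t - b)) by (apply Rmin_glb_lt; lra).
    pose proof (Rmin_l d (t - b)). pose proof (Rmin_r d (t - b)).
    specialize (A k ltac:(unfold k; lra)). specialize (F2 (b + k) ltac:(unfold k; lra)).
    assert (Hid : h (b + k) = h b + (g (b + k) - g b) - eta * k) by (unfold h; ring).
    assert (0 < k) by (unfold k; lra).
    assert (l1 * k <= 0) by nra. assert (0 < eta * k) by nra.
    pose proof (Rle_abs (g (b + k) - g b - l1 * k)). lra.
  - destruct (ld_unfold g b l2 Hl (eta/2) ltac:(lra)) as [d [Hd A]].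
    destruct (F3 (Rmin d (b - s)) ltac:(apply Rmin_glb_lt; lra)) as [y [Hy1 [Hy2 Hy3]]].
    pose proof (Rmin_l d (b - s)).
    destruct (Req_dec y b) as [->|Hyb]; [lra|].
    set (k := b - y). specialize (A k ltac:(unfold k; lra)). replace (b - k) with y in A by (unfold k; ring).
    assert (Hid : h y = h b - (g b - g y) + eta * k) by (unfold h, k; ring).
    assert (0 < k) by (unfold k; lra).
    assert (l2 * k <= 0) by nra. assert (0 < eta * k) by nra.
    pose proof (Rle_abs (- (g y - g b + l2 * k))). rewrite Rabs_Ropp in H3. lra. Qed.

Lemma rd_zero_unique f u l d : rd f u l -> 0 < d -> (forall k, 0 < k < d -> f (u + k) = f u) -> l = 0.
Proof. intros H Hd Hc. destruct (Req_dec l 0) as [|Hl]; auto. exfalso.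
  assert (0 < Rabs l) by (apply Rabs_pos_lt; auto).
  destruct (H (Rabs l / 2) ltac:(lra)) as [d1 [Hd1 A]].
  set (k := Rmin d d1 / 2). assert (0 < Rmin d d1) by (apply Rmin_glb_lt; lra).
  pose proof (Rmin_l d d1). pose proof (Rmin_r d d1).
  specialize (A k ltac:(unfold k; lra)). rewrite Hc in A by (unfold k; lra).
  replace (f u - f u - l * k) with (- (l * k)) in A by ring. rewrite Rabs_Ropp, Rabs_mult, (Rabs_pos_eq k) in A by (unfold k; lra).
  assert (0 < k) by (unfold k; lra). nra. Qed.

Lemma ld_zero_unique f u l d : ld f u l -> 0 < d -> (forall k, 0 < k < d -> f (u - k) = f u) -> l = 0.
Proof. intros H Hd Hc. assert (- l = 0); [|lra]. eapply rd_zero_unique; eauto.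
  intros k Hk. simpl. replace (- (- u + k)) with (u - k) by ring. rewrite Ropp_involutive. auto. Qed.

Lemma sumN_scal' n c f g : (forall i, (i < n)%nat -> g i = c * f i) -> sumN n g = c * sumN n f.
Proof. intros H. rewrite <- sumN_scal. apply sumN_ext. auto. Qed.

Lemma sgn_opp x : sgn (- x) = - sgn x.
Proof. unfold sgn. destruct (Rlt_dec 0 x); destruct (Rlt_dec 0 (-x)); try lra;
  destruct (Rlt_dec (-x) 0); destruct (Rlt_dec x 0); lra. Qed.

Lemma cos_gt x U : Rabs x < U -> U < PI -> cos U < cos x.
Proof. intros H1 H2. assert (cos x = cos (Rabs x)).
  { unfold Rabs. destruct (Rcase_abs x); [rewrite cos_neg|]; reflexivity. }
  rewrite H. pose proof (Rabs_pos x). apply cos_decreasing_1; lra. Qed.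

Lemma fold_max_ge (thinf : nat -> nat -> R) : forall l d p, In p l ->
  thinf (fst p) (snd p) <= fold_right (fun p m => Rmax (thinf (fst p) (snd p)) m) d l.
Proof. induction l; simpl; intros d p H; [contradiction|]. destruct H as [<-|H].
  - apply Rmax_l.
  - eapply Rle_trans; [apply IHl; eauto| apply Rmax_r]. Qed.

Lemma max_ge N thinf i j : (i < N)%nat -> (j < N)%nat -> i <> j -> thinf i j <= max_offdiag N thinf.
Proof. intros Hi Hj Hij. unfold max_offdiag. apply (fold_max_ge thinf _ _ (i, j)).
  unfold offdiag_pairs. apply filter_In. split.
  - apply in_prod; apply in_seq; lia.
  - simpl. apply Nat.eqb_neq in Hij. rewrite Hij. reflexivity. Qed.

Lemma energy_bound N k2 thinf Th W i j : 0 < k2 -> (0 < N)%nat ->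
  (forall i j, (i < N)%nat -> (j < N)%nat -> thinf i j = thinf j i) ->
  (i < N)%nat -> (j < N)%nat -> i <> j ->
  (Rabs (Th j - Th i) - thinf i j) ^ 2 <= 2 * INR N * energy N k2 thinf Th W / k2.
Proof. intros Hk2 HN Hsym Hi Hj Hij. assert (HNp : 0 < INR N) by (apply lt_0_INR; lia).
  set (F0 := (Rabs (Th j - Th i) - thinf i j) ^ 2).
  assert (Hpot : 2 * F0 <= sumN N (fun i => sumN N (fun j => (Rabs (Th j - Th i) - thinf i j) ^ 2))).
  { eapply Rle_trans; [|apply (sumN_ge2 _ _ i j)]; auto.
    - assert (F0 <= sumN N (fun j0 => (Rabs (Th j0 - Th i) - thinf i j0) ^ 2)).
      { apply (sumN_ge1 _ (fun j0 => (Rabs (Th j0 - Th i) - thinf i j0) ^ 2)); auto. intros; apply pow2_ge_0. }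
      assert (F0 <= sumN N (fun j0 => (Rabs (Th j0 - Th j) - thinf j j0) ^ 2)).
      { replace F0 with ((Rabs (Th i - Th j) - thinf j i) ^ 2).
        - apply (sumN_ge1 _ (fun j0 => (Rabs (Th j0 - Th j) - thinf j j0) ^ 2)); auto. intros; apply pow2_ge_0.
        - unfold F0. rewrite Rabs_minus_sym, Hsym; auto. }
      lra.
    - intros. apply sumN_nonneg. intros; apply pow2_ge_0. }
  assert (Hkin : 0 <= sumN N (fun i => W i ^ 2)) by (apply sumN_nonneg; intros; apply pow2_ge_0).
  assert (HE : k2 / (4 * INR N) * (2 * F0) <= energy N k2 thinf Th W).
  { unfold energy. assert (0 < k2 / (4 * INR N)) by (apply Rdiv_lt_0_compat; lra).
    assert (k2 / (4 * INR N) * (2 * F0) <= k2 / (4 * INR N) * sumN N (fun i => sumN N (fun j => (Rabs (Th j - Th i) - thinf i j) ^ 2)))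
      by (apply Rmult_le_compat_l; lra). lra. }
  apply (Rmult_le_compat_l (2 * INR N / k2)) in HE.
  2: { apply Rdiv_le_0_compat; lra. }
  replace (2 * INR N / k2 * (k2 / (4 * INR N) * (2 * F0))) with F0 in HE by (field; lra).
  replace (2 * INR N * energy N k2 thinf Th W / k2) with (2 * INR N / k2 * energy N k2 thinf Th W) by (field; lra).
  exact HE. Qed.

Definition DR N k2 (thinf : nat -> nat -> R) (Th W rh : nat -> R) : R :=
  / 2 * sumN N (fun i => 2 * W i * rh i) +
  k2 / (4 * INR N) * sumN N (fun i => sumN N (fun j =>
     2 * (Rabs (Th j - Th i) - thinf i j) * R0 (Th j - Th i) (W j - W i))).
Definition DL N k2 (thinf : nat -> nat -> R) (Th W rh : nat -> R) : R :=
  / 2 * sumN N (fun i => 2 * W i * rh i) +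
  k2 / (4 * INR N) * sumN N (fun i => sumN N (fun j =>
     2 * (Rabs (Th j - Th i) - thinf i j) * (- R0 (Th j - Th i) (- (W j - W i))))).

Lemma rd_energy N k2 thinf (theta omega : R -> nat -> R) u rh :
  (forall i, (i < N)%nat -> rd (fun t => theta t i) u (omega u i)) ->
  (forall i, (i < N)%nat -> rd (fun t => omega t i) u (rh i)) ->
  rd (fun t => energy N k2 thinf (theta t) (omega t)) u (DR N k2 thinf (theta u) (omega u) rh).
Proof. intros HT HW. unfold energy, DR. apply rd_plus; apply rd_scal; apply rd_sum; intros i Hi.
  - apply rd_pow2. auto.
  - apply rd_sum. intros j Hj. apply (rd_pow2 (fun t => Rabs (theta t j - theta t i) - thinf i j)).
    apply (rd_minus_const (fun t => Rabs (theta t j - theta t i))).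
    apply (rd_abs (fun t => theta t j - theta t i)). apply (rd_minus (fun t => theta t j) (fun t => theta t i)); auto. Qed.

Lemma ld_energy N k2 thinf (theta omega : R -> nat -> R) u rh :
  (forall i, (i < N)%nat -> ld (fun t => theta t i) u (omega u i)) ->
  (forall i, (i < N)%nat -> ld (fun t => omega t i) u (rh i)) ->
  ld (fun t => energy N k2 thinf (theta t) (omega t)) u (DL N k2 thinf (theta u) (omega u) rh).
Proof. intros HT HW. unfold energy, DL. apply ld_plus; apply ld_scal; apply ld_sum; intros i Hi.
  - apply ld_pow2. auto.
  - apply ld_sum. intros j Hj. apply (ld_pow2 (fun t => Rabs (theta t j - theta t i) - thinf i j)).
    apply (ld_minus_const (fun t => Rabs (theta t j - theta t i))).
    apply (ld_abs (fun t => theta t j - theta t i)). apply (ld_minus (fun t => theta t j) (fun t => theta t i)); auto. Qed.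

Lemma DRDL N k0 k1 k2 thinf Th W : (0 < N)%nat ->
  (forall i j, (i < N)%nat -> (j < N)%nat -> thinf i j = thinf j i) ->
  DR N k2 thinf Th W (kuramoto_rhs N k0 k1 k2 thinf Th W) + DL N k2 thinf Th W (kuramoto_rhs N k0 k1 k2 thinf Th W)
  = - / INR N * sumN N (fun i => sumN N (fun j => (k0 * cos (Th j - Th i) + k1) * (W j - W i) ^ 2)).
Proof. intros HN Hsym. assert (HNp : 0 < INR N) by (apply lt_0_INR; lia).
  set (c := fun i j => k0 * cos (Th j - Th i) + k1).
  set (f := fun i j => (Rabs (Th j - Th i) - thinf i j) * sgn (Th j - Th i)).
  set (T := fun i j => 2 * (/ INR N * W i * c i j * (W j - W i) + k2 / INR N * W i * f i j)
                       + k2 / (4 * INR N) * (4 * f i j * (W j - W i))).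
  assert (H1 : DR N k2 thinf Th W (kuramoto_rhs N k0 k1 k2 thinf Th W) + DL N k2 thinf Th W (kuramoto_rhs N k0 k1 k2 thinf Th W)
     = sumN N (fun i => sumN N (fun j => T i j))).
  { unfold DR, DL.
    assert (Hk : sumN N (fun i => 2 * W i * kuramoto_rhs N k0 k1 k2 thinf Th W i) =
                 2 * sumN N (fun i => sumN N (fun j => / INR N * W i * c i j * (W j - W i) + k2 / INR N * W i * f i j))).
    { apply sumN_scal'. intros i Hi. unfold kuramoto_rhs, c, f. cbv beta.
      transitivity (2 * (/ INR N * W i * sumN N (fun j => (k0 * cos (Th j - Th i) + k1) * (W j - W i)) + k2 / INR N * W i * sumN N (fun j => (Rabs (Th j - Th i) - thinf i j) * sgn (Th j - Th i)))); [ring|].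
      f_equal. rewrite <- !sumN_scal, <- sumN_plus. apply sumN_ext; intros; ring. }
    assert (Hp : sumN N (fun i => sumN N (fun j => 2 * (Rabs (Th j - Th i) - thinf i j) * R0 (Th j - Th i) (W j - W i)))
               + sumN N (fun i => sumN N (fun j => 2 * (Rabs (Th j - Th i) - thinf i j) * - R0 (Th j - Th i) (- (W j - W i))))
               = sumN N (fun i => sumN N (fun j => 4 * f i j * (W j - W i)))).
    { rewrite <- sumN_plus. apply sumN_ext. intros i Hi. rewrite <- sumN_plus. apply sumN_ext. intros j Hj.
      transitivity (2 * (Rabs (Th j - Th i) - thinf i j) * (R0 (Th j - Th i) (W j - W i) - R0 (Th j - Th i) (- (W j - W i)))); [ring|].
      rewrite R0_sum. unfold f. ring. }
    transitivity (2 * sumN N (fun i => sumN N (fun j => / INR N * W i * c i j * (W j - W i) + k2 / INR N * W i * f i j))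
        + k2 / (4 * INR N) * sumN N (fun i => sumN N (fun j => 4 * f i j * (W j - W i)))).
    { rewrite <- Hp, <- Hk. field; lra. }
    rewrite <- !sumN_scal, <- sumN_plus. apply sumN_ext. intros i Hi.
    rewrite <- !sumN_scal, <- sumN_plus. apply sumN_ext. intros j Hj. unfold T. ring. }
  assert (H2 : sumN N (fun i => sumN N (fun j => T i j)) = sumN N (fun i => sumN N (fun j => T j i))).
  { rewrite sumN_swap. reflexivity. }
  assert (H3 : sumN N (fun i => sumN N (fun j => T i j)) + sumN N (fun i => sumN N (fun j => T j i)) =
               -2 * / INR N * sumN N (fun i => sumN N (fun j => (k0 * cos (Th j - Th i) + k1) * (W j - W i) ^ 2))).
  { rewrite <- sumN_plus, <- sumN_scal. apply sumN_ext. intros i Hi.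
    rewrite <- sumN_plus, <- sumN_scal. apply sumN_ext. intros j Hj.
    unfold T, c, f. rewrite (Rabs_minus_sym (Th i) (Th j)), (Hsym j i) by auto.
    replace (Th i - Th j) with (- (Th j - Th i)) by ring. rewrite cos_neg, sgn_opp. field; lra. }
  lra. Qed.

Lemma fin_delta n (P : nat -> R -> Prop) :
  (forall i d d', 0 < d' -> d' <= d -> P i d -> P i d') ->
  (forall i, (i < n)%nat -> exists d, 0 < d /\ P i d) ->
  exists d, 0 < d /\ forall i, (i < n)%nat -> P i d.
Proof. intros Hm. induction n; intros H.
  - exists 1. split; [lra| intros; lia].
  - destruct IHn as [d1 [Hd1 A1]]. { intros; apply H; lia. }
    destruct (H n ltac:(lia)) as [d2 [Hd2 A2]].
    exists (Rmin d1 d2). split; [apply Rmin_glb_lt; auto|]. intros i Hi.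
    destruct (Nat.eq_dec i n) as [->|Hin].
    + apply (Hm n d2); auto; [apply Rmin_glb_lt; auto| apply Rmin_r].
    + apply (Hm i d1); [apply Rmin_glb_lt; auto| apply Rmin_l| apply A1; lia]. Qed.

Lemma rc_lt g b U : rc g b -> g b < U -> exists d, 0 < d /\ forall h, 0 < h < d -> g (b + h) < U.
Proof. intros H HU. destruct (H (U - g b) ltac:(lra)) as [d [Hd A]]. exists d; split; auto.
  intros h Hh. specialize (A h Hh). apply Rabs_def2 in A. lra. Qed.

Theorem lemma3p1 (N : nat) (k0 k1 k2 : R) (thinf : nat -> nat -> R)
  (tau : Rbar) (theta omega : R -> nat -> R) :
  (2 <= N)%nat ->
  0 <= k0 -> 0 <= k1 -> 0 < k2 ->
  (forall i, (i < N)%nat -> thinf i i = 0) ->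
  (forall i j, (i < N)%nat -> (j < N)%nat -> thinf i j = thinf j i) ->
  Rbar_lt 0 tau ->
  is_solution N k0 k1 k2 thinf tau theta omega ->
  let U := U_bound N k2 thinf (energy N k2 thinf (theta 0) (omega 0)) in
  in_S N U (theta 0) ->
  k0 * cos U + k1 > 0 ->
  forall t, 0 <= t -> Rbar_lt t tau -> in_S N U (theta t).
Proof.
  intros HN Hk0 Hk1 Hk2 Hdiag Hsym Htau Hsol U HS0 HkU t Ht0 Httau.
  assert (HN0 : (0 < N)%nat) by lia.
  assert (HNp : 0 < INR N) by (apply lt_0_INR; lia).
  destruct HS0 as [HUpi Hpair0].
  assert (HU0 : 0 < U).
  { specialize (Hpair0 0%nat 0%nat HN0 HN0). rewrite Rminus_eq_0, Rabs_R0 in Hpair0. exact Hpair0. }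
  assert (Hlt : forall u b, u <= b -> Rbar_lt b tau -> Rbar_lt u tau).
  { intros u b Hub Hb. apply (Rbar_le_lt_trans u b tau); [simpl; exact Hub| exact Hb]. }
  assert (HdT : forall u i, 0 < u -> Rbar_lt u tau -> (i < N)%nat ->
     is_derive (fun s => theta s i) u (omega u i)).
  { intros u i Hu Hut Hi. apply (Hsol i Hi); auto. }
  assert (HdW : forall u i, 0 < u -> Rbar_lt u tau -> (i < N)%nat ->
     is_derive (fun s => omega s i) u (kuramoto_rhs N k0 k1 k2 thinf (theta u) (omega u) i)).
  { intros u i Hu Hut Hi. apply (Hsol i Hi); auto. }
  assert (HrcT : forall i, (i < N)%nat -> rc (fun s => theta s i) 0).
  { intros i Hi. apply rc_of_filterlim. apply (Hsol i Hi). }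
  assert (HrcW : forall i, (i < N)%nat -> rc (fun s => omega s i) 0).
  { intros i Hi. apply rc_of_filterlim. apply (Hsol i Hi). }
  set (E := fun s => energy N k2 thinf (theta s) (omega s)).
  assert (HrdE : forall u, 0 < u -> Rbar_lt u tau ->
    rd E u (DR N k2 thinf (theta u) (omega u) (kuramoto_rhs N k0 k1 k2 thinf (theta u) (omega u)))).
  { intros u Hu Hut. apply rd_energy; intros i Hi; apply rd_of_derive; auto. }
  assert (HldE : forall u, 0 < u -> Rbar_lt u tau ->
    ld E u (DL N k2 thinf (theta u) (omega u) (kuramoto_rhs N k0 k1 k2 thinf (theta u) (omega u)))).
  { intros u Hu Hut. apply ld_energy; intros i Hi; apply ld_of_derive; auto. }
  assert (HrcE : rc E 0).
  { unfold E, energy. apply rc_plus; apply rc_scal; apply rc_sum; intros i Hi.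
    - apply (rc_pow2 (fun s => omega s i)). auto.
    - apply rc_sum; intros j Hj. apply (rc_pow2 (fun t => Rabs (theta t j - theta t i) - thinf i j)).
      apply (rc_minus_const (fun t => Rabs (theta t j - theta t i))).
      apply (rc_abs (fun t => theta t j - theta t i)).
      apply (rc_minus (fun t => theta t j) (fun t => theta t i)); auto. }
  set (pairs := fun y => forall i j, (i < N)%nat -> (j < N)%nat -> Rabs (theta y i - theta y j) < U).
  assert (Hc : forall y i j, pairs y -> (i < N)%nat -> (j < N)%nat -> 0 < k0 * cos (theta y j - theta y i) + k1).
  { intros y i j Hy Hi Hj.
    assert (cos U < cos (theta y j - theta y i)).
    { apply cos_gt; [rewrite Rabs_minus_sym; apply Hy; auto| exact HUpi]. }
    assert (k0 * cos U <= k0 * cos (theta y j - theta y i)) by (apply Rmult_le_compat_l; lra). lra. }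
  assert (HUdef : U = max_offdiag N thinf + sqrt (2 * INR N * E 0 / k2)) by reflexivity.
  assert (Key : forall b, 0 < b -> Rbar_lt b tau -> (forall y, 0 <= y < b -> pairs y) -> pairs b).
  { intros b Hb Hbt Hbelow.
    assert (Hloc : forall u, 0 < u < b -> exists l1 l2, rd E u l1 /\ ld E u l2 /\ l1 + l2 <= 0).
    { intros u Hu. assert (Hut : Rbar_lt u tau) by (apply (Hlt u b); [lra| auto]).
      exists (DR N k2 thinf (theta u) (omega u) (kuramoto_rhs N k0 k1 k2 thinf (theta u) (omega u))),
             (DL N k2 thinf (theta u) (omega u) (kuramoto_rhs N k0 k1 k2 thinf (theta u) (omega u))).
      split; [apply HrdE; auto; lra|]. split; [apply HldE; auto; lra|].
      rewrite DRDL by auto.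
      assert (0 <= sumN N (fun i => sumN N (fun j => (k0 * cos (theta u j - theta u i) + k1) * (omega u j - omega u i) ^ 2))).
      { apply sumN_nonneg; intros i Hi; apply sumN_nonneg; intros j Hj. apply Rmult_le_pos; [|apply pow2_ge_0].
        left. apply Hc; auto. apply Hbelow. lra. }
      assert (0 < / INR N) by (apply Rinv_0_lt_compat; lra). nra. }
    assert (Emono : forall s t, 0 <= s -> s <= t -> t <= b -> E t <= E s).
    { intros s t' Hs Hst Htb. destruct (Rle_lt_or_eq s t' Hst) as [Hst'| <-]; [|lra].
      apply mono; auto.
      - destruct (Rle_lt_or_eq 0 s Hs) as [Hs'| <-]; [|exact HrcE].
        eapply rd_rc. apply HrdE; [lra| apply (Hlt s b); [lra|auto]].
      - eapply ld_lc. apply HldE; [lra| apply (Hlt t' b); auto].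
      - intros u Hu. apply Hloc. lra. }
    assert (HEb : E b <= E 0) by (apply Emono; lra).
    destruct (Rle_lt_or_eq _ _ HEb) as [HEs | HEe].
    - intros i j Hi Hj. destruct (Nat.eq_dec i j) as [<-|Hij].
      { rewrite Rminus_eq_0, Rabs_R0. exact HU0. }
      pose proof (energy_bound N k2 thinf (theta b) (omega b) j i Hk2 HN0 Hsym Hj Hi (not_eq_sym Hij)) as HB.
      change (energy N k2 thinf (theta b) (omega b)) with (E b) in HB.
      assert (HD : 2 * INR N * E b / k2 < 2 * INR N * E 0 / k2).
      { unfold Rdiv. apply Rmult_lt_compat_r; [apply Rinv_0_lt_compat; lra|]. apply Rmult_lt_compat_l; lra. }
      assert (Hsq : Rabs (Rabs (theta b i - theta b j) - thinf j i) < sqrt (2 * INR N * E 0 / k2)).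
      { rewrite <- sqrt_Rsqr_abs. apply sqrt_lt_1_alt. split; [apply Rle_0_sqr|]. rewrite Rsqr_pow2. lra. }
      assert (thinf j i <= max_offdiag N thinf) by (apply max_ge; auto).
      pose proof (Rle_abs (Rabs (theta b i - theta b j) - thinf j i)). lra.
    - assert (Hconst : forall y, 0 <= y <= b -> E y = E 0).
      { intros y Hy. assert (E y <= E 0) by (apply Emono; lra). assert (E b <= E y) by (apply Emono; lra). lra. }
      assert (Hdw : forall u, 0 < u < b -> forall i j, (i < N)%nat -> (j < N)%nat -> omega u j - omega u i = 0).
      { intros u Hu. assert (Hut : Rbar_lt u tau) by (apply (Hlt u b); [lra| auto]).
        assert (HR : DR N k2 thinf (theta u) (omega u) (kuramoto_rhs N k0 k1 k2 thinf (theta u) (omega u)) = 0).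
        { apply (rd_zero_unique E u _ (b - u)); [apply HrdE; auto; lra| lra|].
          intros k Hk. rewrite (Hconst u) by lra. apply Hconst. lra. }
        assert (HL : DL N k2 thinf (theta u) (omega u) (kuramoto_rhs N k0 k1 k2 thinf (theta u) (omega u)) = 0).
        { apply (ld_zero_unique E u _ u); [apply HldE; auto; lra| lra|].
          intros k Hk. rewrite (Hconst u) by lra. apply Hconst. lra. }
        pose proof (DRDL N k0 k1 k2 thinf (theta u) (omega u) HN0 Hsym) as HS. rewrite HR, HL in HS.
        assert (HS0 : sumN N (fun i => sumN N (fun j => (k0 * cos (theta u j - theta u i) + k1) * (omega u j - omega u i) ^ 2)) = 0).
        { apply (Rmult_eq_reg_l (/ INR N)); [rewrite Rmult_0_r; lra| apply Rinv_neq_0_compat; lra]. }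
        assert (Hpu : pairs u) by (apply Hbelow; lra).
        intros i j Hi Hj.
        assert (Hrow : sumN N (fun j0 => (k0 * cos (theta u j0 - theta u i) + k1) * (omega u j0 - omega u i) ^ 2) = 0).
        { apply (sumN_zero_each N (fun i1 => sumN N (fun j0 => (k0 * cos (theta u j0 - theta u i1) + k1) * (omega u j0 - omega u i1) ^ 2)));
            [| exact HS0| exact Hi].
          intros i0 Hi0; apply sumN_nonneg; intros j0 Hj0; apply Rmult_le_pos; [left; apply Hc; auto| apply pow2_ge_0]. }
        assert (Hel : (k0 * cos (theta u j - theta u i) + k1) * (omega u j - omega u i) ^ 2 = 0).
        { apply (sumN_zero_each N (fun j0 => (k0 * cos (theta u j0 - theta u i) + k1) * (omega u j0 - omega u i) ^ 2));
            [| exact Hrow| exact Hj].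
          intros j0 Hj0; apply Rmult_le_pos; [left; apply Hc; auto| apply pow2_ge_0]. }
        pose proof (Hc u i j Hpu Hi Hj).
        destruct (Rmult_integral _ _ Hel) as [Hc0|Hd0]; [lra|]. simpl in Hd0. rewrite Rmult_1_r in Hd0. destruct (Rmult_integral _ _ Hd0); lra. }
      intros i j Hi Hj.
      set (x := fun s => theta s i - theta s j).
      assert (Hrcx : rc x 0) by (apply (rc_minus (fun s => theta s i) (fun s => theta s j)); auto).
      assert (Hlcx : ld x b (omega b i - omega b j)).
      { apply (ld_minus (fun s => theta s i) (fun s => theta s j)); apply ld_of_derive; apply HdT; auto. }
      assert (Hrdx : forall u, 0 < u < b -> rd x u 0).
      { intros u Hu. assert (Hut : Rbar_lt u tau) by (apply (Hlt u b); [lra| auto]).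
        eapply rd_val. { apply (rd_minus (fun s => theta s i) (fun s => theta s j)); apply rd_of_derive; apply HdT; auto; lra. }
        specialize (Hdw u Hu j i Hj Hi). lra. }
      assert (Hldx : forall u, 0 < u < b -> ld x u 0).
      { intros u Hu. assert (Hut : Rbar_lt u tau) by (apply (Hlt u b); [lra| auto]).
        eapply ld_val. { apply (ld_minus (fun s => theta s i) (fun s => theta s j)); apply ld_of_derive; apply HdT; auto; lra. }
        specialize (Hdw u Hu j i Hj Hi). lra. }
      assert (Hm1 : x b <= x 0).
      { apply mono; [lra| auto| eapply ld_lc; eauto|]. intros u Hu. exists 0, 0. split; [auto|]. split; [auto| lra]. }
      assert (Hm2 : -1 * x b <= -1 * x 0).
      { apply (mono (fun s => -1 * x s)); [lra| apply rc_scal; auto| eapply ld_lc; apply ld_scal; eauto|].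
        intros u Hu. exists (-1 * 0), (-1 * 0). split; [apply rd_scal; auto|]. split; [apply ld_scal; auto| lra]. }
      assert (Hx : x b = x 0) by lra. unfold x in Hx. rewrite Hx. apply Hpair0; auto. }
  split; [exact HUpi|].
  set (Sset := fun w => 0 <= w <= t /\ forall y, 0 <= y <= w -> pairs y).
  assert (HS0 : Sset 0).
  { split; [lra|]. intros y Hy. replace y with 0 by lra. exact Hpair0. }
  destruct (completeness Sset) as [b [Hub Hlub]].
  { exists t. intros w [Hw _]. lra. }
  { exists 0. exact HS0. }
  assert (Hb0 : 0 <= b) by (apply Hub; exact HS0).
  assert (Hbt : b <= t) by (apply Hlub; intros w [Hw _]; lra).
  assert (Hbelow : forall y, 0 <= y < b -> pairs y).
  { intros y Hy. destruct (classic (pairs y)) as [|Hn]; auto. exfalso.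
    assert (b <= y); [|lra]. apply Hlub. intros w [Hw Hw2].
    destruct (Rle_dec w y) as [|Hwy]; auto. exfalso. apply Hn, Hw2. lra. }
  assert (Hbtau : Rbar_lt b tau) by (apply (Hlt b t); auto).
  assert (Hpb : pairs b).
  { destruct (Rle_lt_or_eq 0 b Hb0) as [Hbp| <-]; [apply Key; auto| exact Hpair0]. }
  destruct (Rle_lt_or_eq b t Hbt) as [Hbt'| <-]; [|exact Hpb].
  exfalso.
  assert (HrcTb : forall i, (i < N)%nat -> rc (fun s => theta s i) b).
  { intros i Hi. destruct (Rle_lt_or_eq 0 b Hb0) as [Hbp| <-]; [|auto].
    eapply rd_rc. apply rd_of_derive. apply HdT; auto. }
  assert (Hext : exists d, 0 < d /\ forall i, (i < N)%nat -> forall j, (j < N)%nat ->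
     forall h, 0 < h < d -> Rabs (theta (b + h) i - theta (b + h) j) < U).
  { apply (fin_delta N (fun i d => forall j, (j < N)%nat -> forall h, 0 < h < d -> Rabs (theta (b + h) i - theta (b + h) j) < U)).
    - intros i d d' Hd' Hdd Hd j Hj h Hh. apply Hd; auto; lra.
    - intros i Hi. apply (fin_delta N (fun j d => forall h, 0 < h < d -> Rabs (theta (b + h) i - theta (b + h) j) < U)).
      + intros j d d' Hd' Hdd Hd h Hh. apply Hd; lra.
      + intros j Hj. apply (rc_lt (fun s => Rabs (theta s i - theta s j))).
        * apply (rc_abs (fun s => theta s i - theta s j)). apply (rc_minus (fun s => theta s i) (fun s => theta s j)); auto.
        * apply Hpb; auto. }
  destruct Hext as [d [Hd Hext]].
  assert (0 < Rmin d (t - b)) by (apply Rmin_glb_lt; lra).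
  pose proof (Rmin_l d (t - b)). pose proof (Rmin_r d (t - b)).
  assert (HSw : Sset (b + Rmin d (t - b) / 2)).
  { split; [lra|]. intros y Hy. destruct (Rlt_le_dec y b) as [Hyb|Hyb].
    - apply Hbelow; lra.
    - destruct (Rle_lt_or_eq b y Hyb) as [Hyb'| <-]; [|exact Hpb].
      intros i j Hi Hj. replace y with (b + (y - b)) by ring. apply Hext; auto. lra. }
  assert (b + Rmin d (t - b) / 2 <= b) by (apply Hub; auto). lra.
Qed.
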